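(* Let $q\in\mathbb C[z]$ with $q(0)=0$, let $n\in\mathbb N$ and $k>0$ with $\deg q<n$. For $c>0$ put $\delta(c)=(2kc)^{-1/n}$ and $q_c=k(cz^n-q)$. Then for every sufficiently large $c>0$, $q_c(\delta(c)\mathbb D)\subseteq\mathbb D$ and all zeros of $q_c$ belong to $\delta(c)\mathbb D$.
   Context: $\mathbb D=\{z\in\mathbb C:|z|<1\}$. *)

(* Defs.v *)
From mathcomp Require Import all_boot all_algebra.
From mathcomp Require Import reals exp.
From mathcomp Require Export complex.
Set Implicit Arguments. Unset Strict Implicit. Unset Printing Implicit Defensive.
Import GRing.Theory Num.Theory.
Local Open Scope ring_scope.

Definition delta (R : realType) (n : nat) (k c : R) : R :=
  powR (2 * k * c) (- (n%:R)^-1).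

Definition qc (R : realType) (q : {poly R[i]}) (n : nat) (k c : R) : {poly R[i]} :=
  (k%:C)%C *: ((c%:C)%C *: 'X^n - q).

(* Main.v *)
Require Import Defs.
From mathcomp Require Import all_boot all_order all_algebra.
From mathcomp Require Import reals exp complex.
Import Order.TTheory GRing.Theory Num.Theory.
Local Open Scope ring_scope.
From mathcomp Require Import lra.

Section S.
Variable R : realType.
Definition nz (z : R[i]) : R := complex.Re `|z|.
Lemma nzE z : `|z| = ((nz z)%:C)%C.
Proof. by rewrite /nz RRe_real // normr_real. Qed.
Lemma nz_ge0 z : 0 <= nz z.
Proof. by rewrite -ler0c -nzE. Qed.
Lemma nzM x y : nz (x * y) = nz x * nz y.
Proof. by apply: complexI; rewrite rmorphM /= -!nzE normrM. Qed.
Lemma nzX x m : nz (x ^+ m) = nz x ^+ m.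
Proof. by apply: complexI; rewrite rmorphXn /= -!nzE normrX. Qed.
Lemma nzD x y : nz (x + y) <= nz x + nz y.
Proof. by rewrite -lecR rmorphD /= -!nzE ler_normD. Qed.
Lemma nzB x y : nz (x - y) <= nz x + nz y.
Proof. rewrite -lecR rmorphD /= -!nzE. by rewrite -(normrN y) ler_normD. Qed.
Lemma nzC x : 0 <= x -> nz ((x%:C)%C) = x.
Proof. move=> hx; apply: complexI; rewrite -nzE ger0_norm // ler0c //. Qed.
Lemma nz_sum n (F : 'I_n -> R[i]) : nz (\sum_(i < n) F i) <= \sum_(i < n) nz (F i).
Proof.
rewrite -lecR rmorph_sum /= -nzE.
apply: le_trans (ler_norm_sum _ _ _) _.
by rewrite le_eqVlt; apply/orP; left; apply/eqP; apply: eq_bigr => i _; rewrite nzE.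
Qed.

Lemma nz0 : nz (0 : R[i]) = 0.
Proof. by rewrite /nz normr0. Qed.

Lemma qbound (q : {poly R[i]}) (m : nat) (z : R[i]) :
  q.[0] = 0 -> (size q <= m.+1)%N ->
  (nz z <= 1 -> nz q.[z] <= (\sum_(i < m.+1) nz q`_i) * nz z) /\
  (1 <= nz z -> nz q.[z] <= (\sum_(i < m.+1) nz q`_i) * nz z ^+ m).
Proof.
move=> q0 hs; rewrite (horner_coef_wide z hs) !mulr_suml; split => hz.
  apply: le_trans; first exact: nz_sum.
  apply: ler_sum => -[[|j] hj] _ /=.
    by rewrite -horner_coef0 q0 nzM nz0 !mul0r.
  rewrite nzM nzX; apply: ler_wpM2l; first exact: nz_ge0.
  rewrite exprS -[X in _ <= X]mulr1.
  apply: ler_wpM2l; first exact: nz_ge0.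
  by apply: exprn_ile1 => //; exact: nz_ge0.
apply: le_trans; first exact: nz_sum.
apply: ler_sum => -[j hj] _ /=.
rewrite nzM nzX; apply: ler_wpM2l; first exact: nz_ge0.
by apply: ler_weXn2l.
Qed.

Lemma deltaX (n : nat) (k c : R) : (0 < n)%N -> 0 < 2 * k * c ->
  2 * k * c * delta n k c ^+ n = 1.
Proof.
move=> hn hp; rewrite /delta -powR_mulrn; last exact: powR_ge0.
rewrite -powRrM mulNr mulVf; last by rewrite pnatr_eq0 -lt0n.
have := @powR_invn R (2 * k * c) 1 (ltW hp).
rewrite expr1 => h; rewrite (_ : -1 = 1 *- 1) ?h ?mulfV //; first by rewrite gt_eqF.
Qed.
End S.
Arguments nz {R}.
Arguments nzE {R}.
Arguments nz_ge0 {R}.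
Arguments nzM {R}.
Arguments nzX {R}.
Arguments nzD {R}.
Arguments nzB {R}.
Arguments nzC {R}.
Arguments nz_sum {R}.
Arguments nz0 {R}.
Arguments qbound {R}.
Arguments deltaX {R}.

Theorem lemma3p5 (R : realType) (q : {poly R[i]}) (n : nat) (k : R) :
  q.[0] = 0 -> 0 < k -> (0 < n)%N -> (size q <= n)%N ->
  exists c0 : R, forall c : R, c0 < c ->
    (forall z : R[i], `|z| < ((delta n k c)%:C)%C -> `|(qc q n k c).[z]| < 1) /\
    (forall z : R[i], root (qc q n k c) z -> `|z| < ((delta n k c)%:C)%C).
Proof.
move=> q0 hk hn hs.
case: n hn hs => [//|m] _ hs.
set a := \sum_(i < m.+1) nz q`_i.
have ha : 0 <= a by apply: sumr_ge0 => i _; exact: nz_ge0.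
set e := (2 * k * (a + 1) + 1)^-1.
have he0 : 0 < e by rewrite invr_gt0; nra.
have he1 : (2 * k * (a + 1) + 1) * e = 1 by rewrite mulfV //; apply: lt0r_neq0; nra.
have hp1 : 0 <= 2 * k * (a + 1) * e.
  by apply: mulr_ge0; [apply: mulr_ge0; lra|lra].
have hp2 : 0 <= 2 * k * e by apply: mulr_ge0; lra.
have heb : e <= 1 /\ 2 * k * a * e < 1 by split; lra.
set E := e ^+ m.+1.
have hE : 0 < E by rewrite exprn_gt0.
exists (Num.max a (2 * k * E)^-1) => c.
rewrite gt_max => /andP[hac hc].
have hIE : (2 * k * E)^-1 * (2 * k * E) = 1 by rewrite mulVf //; apply: lt0r_neq0; nra.
have hI : 0 < (2 * k * E)^-1 by rewrite invr_gt0; nra.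
have hc0 : 0 < c by apply: lt_trans hI hc.
have hkc : 0 < 2 * k * c by nra.
set d := delta m.+1 k c.
have hdn := deltaX m.+1 k c isT hkc; rewrite -/d in hdn.
have hd0 : 0 < d by apply: powR_gt0.
have hcE : 1 < 2 * k * c * E.
  have h2 : 0 < 2 * k * E by apply: mulr_gt0 => //; lra.
  have h := hc; rewrite -(ltr_pM2r h2) hIE in h; lra.
have hde : d < e.
  rewrite ltNge; apply/negP => hed.
  have : E <= d ^+ m.+1 by apply: lerXn2r => //; [rewrite nnegrE ltW|rewrite nnegrE ltW].
  move=> hEd.
  have : 2 * k * c * E <= 2 * k * c * d ^+ m.+1 by apply: ler_wpM2l; [exact: ltW|].
  lra.
have Hq z := qbound q m z q0 hs; rewrite -/a in Hq.
have qcE z : (qc q m.+1 k c).[z] = (k%:C)%C * ((c%:C)%C * z ^+ m.+1 - q.[z]).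
  by rewrite /qc hornerZ hornerD hornerN hornerZ hornerXn.
split.
- move=> z; rewrite nzE ltcR => hz.
  rewrite nzE (_ : (1 : R[i]) = ((1:R)%:C)%C) // ltcR qcE nzM nzC; last exact: ltW.
  have hx := nz_ge0 z.
  have H1 := (Hq z).1 (ltW (lt_le_trans hz (ltW (lt_le_trans hde heb.1)))).
  have H2 := nzB ((c%:C)%C * z ^+ m.+1) q.[z].
  rewrite nzM nzX nzC in H2; last exact: ltW.
  have H3 : nz z ^+ m.+1 < d ^+ m.+1 by rewrite ltrXn2r.
  have H4 : c * nz z ^+ m.+1 < c * d ^+ m.+1 by rewrite ltr_pM2l.
  have H5 : a * nz z <= a * e by apply: ler_wpM2l => //; apply: ltW; apply: lt_trans hde.
  set X := nz (_ - _) in H2 *.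
  have H6 : k * X <= k * (c * nz z ^+ m.+1 + a * nz z).
    by apply: ler_wpM2l; [lra|lra].
  have H7 : k * (c * nz z ^+ m.+1) < k * (c * d ^+ m.+1) by rewrite ltr_pM2l.
  have H8 : k * (a * nz z) <= k * (a * e) by apply: ler_wpM2l; lra.
  lra.
- move=> z /rootP; rewrite qcE => /eqP; rewrite mulf_eq0 => /orP[/eqP hk0|/eqP hz0].
    have hk00 : k = 0 by apply: complexI.
    by move: hk; rewrite hk00 ltxx.
  move/subr0_eq: hz0 => hz0.
  have hx : c * nz z ^+ m.+1 = nz q.[z] by rewrite -hz0 nzM nzX nzC // ltW.
  rewrite nzE ltcR ltNge; apply/negP => hdx.
  have hx0 : 0 < nz z by apply: lt_le_trans hd0 hdx.
  have hdm : d ^+ m <= nz z ^+ m.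
    apply: lerXn2r => //. all: try by rewrite nnegrE ltW.
  case: (lerP (nz z) 1) => hx1.
    have H1 := (Hq z).1 hx1.
    rewrite -hx exprSr mulrA in H1.
    have H2 : c * nz z ^+ m <= a by rewrite -(ler_pM2r hx0).
    have H3 : c * d ^+ m <= a.
      by apply: le_trans H2; apply: ler_wpM2l; lra.
    have H4 : c * d ^+ m * d <= a * d by rewrite ler_pM2r.
    have H5 : a * d <= a * e by apply: ler_wpM2l; lra.
    have H6 : 2 * k * (c * d ^+ m * d) <= 2 * k * (a * e) by apply: ler_wpM2l; lra.
    rewrite exprSr in hdn. suff : (1:R) < 1 by rewrite ltxx. lra.
  have H1 := (Hq z).2 (ltW hx1).
  rewrite -hx exprS mulrCA in H1.
  have hxm : 0 < nz z ^+ m by rewrite exprn_gt0.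
  have H2 : c * nz z <= a.
    rewrite -(ler_pM2l hxm); move: H1; rewrite mulrCA [a * _]mulrC; lra.
  have H3 : c * 1 <= c * nz z by apply: ler_wpM2l; lra.
  suff : (1:R) < 1 by rewrite ltxx. lra.
Qed.
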